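(* Let $q$ be even and let $\mathcal U$ be a non-classical orthogonal Buekenhout–Metz unital with respect to $\ell_\infty$ in $\mathrm{PG}(2,q^2)$. Let $P$ be a point with $P\notin\mathcal U\cup\ell_\infty$. Then (1) the points of $\mathrm{pedal}(P)$ lie on the lines of a Baer pencil whose vertex is a point of $\ell_\infty$, and (2) $\mathrm{pedal}(P)$ is an arc.
   Context: Points of $\mathrm{PG}(2,q^2)$ have homogeneous coordinates $(x,y,z)$; $\ell_\infty$ is the line $z=0$. For $q$ even, an orthogonal Buekenhout–Metz unital with respect to $\ell_\infty$ is (up to a collineation fixing $\ell_\infty$) a set $\mathcal U_{\alpha\beta}=\{(x,\alpha x^2+\beta x^{q+1}+r,1): x\in\mathbb{F}_{q^2}, r\in\mathbb{F}_q\}\cup\{(0,1,0)\}$ where $\alpha,\beta\in\mathbb{F}_{q^2}$, $\beta\notin\mathbb{F}_q$ and $\alpha^{q+1}/(\beta^q+\beta)^2$ has absolute trace $0$ in $\mathbb{F}_q$ (originally defined as the unitals corresponding to an elliptic cone containing a spread line in the Bruck–Bose representation in $\mathrm{PG}(4,q)$ with respect to $\ell_\infty$); it is non-classical iff $\alpha\neq0$. A unital is a set of $q^3+1$ points meeting every line in $1$ or $q+1$ points; a tangent is a line meeting it in exactly one point. For $P$ not on the unital, the $q+1$ tangents through $P$ meet the unital in the feet of $P$, forming $\mathrm{pedal}(P)$. An arc is a point set meeting every line in at most $2$ points. A Baer subline is a set of $q+1$ points of a line projectively equivalent to $\{(a,b,0):(a,b)\in\mathbb{F}_q^2\setminus\{0\}\}$;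 a Baer pencil is the set of $q+1$ lines joining a vertex point to the points of a Baer subline. *)

(* Defs.v *)
(* Projective plane PG(2, F) over a finite field F with
   #|F| = q^2; points are nonzero row vectors of 'rV[F]_3 taken up to
   nonzero scalars (all point sets below are scale-invariant predicates),
   lines are given by nonzero coefficient vectors. *)
From HB Require Import structures.
From mathcomp Require Import all_boot all_order all_algebra.
Set Implicit Arguments. Unset Strict Implicit. Unset Printing Implicit Defensive.
Import Order.TTheory GRing.Theory.
Local Open Scope ring_scope.

Section PG.
Variables (F : finFieldType) (q : nat).

Definition vec := 'rV[F]_3.

Definition pt (x y z : F) : vec := \row_(j < 3) nth 0 [:: x; y; z] j.

Definition projeq (u v : vec) : Prop := exists k : F, k != 0 /\ u = k *: v.

Definition inFq (x : F) : bool := x ^+ q == x.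

(* absolute trace F_q -> F_2, q = 2^h, h = logn 2 q *)
Definition abstrace (t : F) : F := \sum_(i < logn 2 q) t ^+ (2 ^ i).

Definition on_linf (v : vec) : bool := v 0 2%:R == 0.

Definition on_line (c v : vec) : bool := \sum_(i < 3) c 0 i * v 0 i == 0.

Definition det3 (u v w : vec) : F :=
  \det (\matrix_(i < 3, j < 3)
          (if (i : nat) == 0%N then u 0 j else if (i : nat) == 1%N then v 0 j else w 0 j)).

Definition U_ab (alpha beta : F) (v : vec) : Prop :=
  (exists x r : F, inFq r /\
     projeq v (pt x (alpha * x ^+ 2 + beta * x ^+ q.+1 + r) 1))
  \/ projeq v (pt 0 1 0).

Definition orthBM_params (alpha beta : F) : Prop :=
  ~~ inFq beta /\
  abstrace (alpha ^+ q.+1 / (beta ^+ q + beta) ^+ 2) = 0.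

(* collineation of PG(2,F): v |-> v^sigma A  (element of PGammaL(3,F)) *)
Definition collin (sigma : {rmorphism F -> F}) (A : 'M[F]_3) (v : vec) : vec :=
  map_mx sigma v *m A.

Definition fixes_linf (f : vec -> vec) : Prop :=
  forall v, v != 0 -> on_linf v -> on_linf (f v).

Definition nonclassical_orthBM (U : vec -> Prop) : Prop :=
  exists (alpha beta : F) (sigma : {rmorphism F -> F}) (A : 'M[F]_3),
    orthBM_params alpha beta /\ alpha != 0 /\ A \in unitmx /\
    fixes_linf (collin sigma A) /\
    forall w, U w <-> exists v, U_ab alpha beta v /\ w = collin sigma A v.

Definition tangent (U : vec -> Prop) (c : vec) : Prop :=
  c != 0 /\ exists u, u != 0 /\ U u /\ on_line c u /\
    forall w, w != 0 -> U w -> on_line c w -> projeq w u.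

Definition pedal (U : vec -> Prop) (P : vec) (v : vec) : Prop :=
  v != 0 /\ U v /\ exists c, tangent U c /\ on_line c P /\ on_line c v.

Definition is_arc (S : vec -> Prop) : Prop :=
  forall c u v w, c != 0 -> u != 0 -> v != 0 -> w != 0 ->
    S u -> S v -> S w -> on_line c u -> on_line c v -> on_line c w ->
    projeq u v \/ projeq u w \/ projeq v w.

(* Baer subline: image under A in PGL(3,F) of {(a,b,0) : (a,b) in F_q^2 \ 0};
   Baer pencil with vertex V (not on the line of the subline): the lines
   joining V to the points of the subline. *)
Definition on_baer_pencil (V : vec) (A : 'M[F]_3) (p : vec) : Prop :=
  exists a b : F, inFq a /\ inFq b /\ (a != 0 \/ b != 0) /\
    det3 V (pt a b 0 *m A) p = 0.

Definition lies_on_baer_pencil_linf (S : vec -> Prop) : Prop :=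
  exists (V : vec) (A : 'M[F]_3),
    V != 0 /\ on_linf V /\ A \in unitmx /\
    (forall u : vec, on_linf u -> V != u *m A) /\
    forall p, S p -> on_baer_pencil V A p.

End PG.

(* Main.v *)
Require Import Defs.
From HB Require Import structures.
From mathcomp Require Import all_boot all_order all_algebra.
From mathcomp Require Import ring.
From mathcomp Require Import fingroup pgroup abelian finfield.

Set Implicit Arguments. Unset Strict Implicit. Unset Printing Implicit Defensive.
Import GRing.Theory.
Local Open Scope ring_scope.

Local Open Scope ring_scope.
Lemma char2 (F : finFieldType) (q : nat) (hq : ~~ odd q) (hF : #|F| = (q ^ 2)%N) :
  2 \in [pchar F] /\ q = (2 ^ logn 2 q)%N.
Proof.
have [p pp chp] := finPcharP F.
have ab := fin_ring_pchar_abelem chp.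
have pg : (p.-group [set: F])%g by case/and3P: ab.
have cF : #|F| = (p ^ logn p #|F|)%N.
  have := card_pgroup pg. by rewrite cardsT.
have p2 : p = 2%N.
  have : (2 %| p ^ logn p #|F|)%N.
    by rewrite -cF hF Euclid_dvdX // dvdn2 hq /=.
  rewrite Euclid_dvdX // => /andP[].
  by rewrite dvdn_prime2 // => /eqP.
subst p. split=> //.
have : (q %| 2 ^ logn 2 #|F|)%N by rewrite -cF hF dvdn_exp.
move/(dvdn_pfactor _ _ (isT : prime 2)) => -[m _ ->]. by rewrite pfactorK.
Qed.

Section Fr.
Variables (F : finFieldType) (q : nat).
Hypothesis ch2 : 2 \in [pchar F].
Hypothesis hq : q = (2 ^ logn 2 q)%N.
Hypothesis hF : #|F| = (q ^ 2)%N.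
Local Notation Fr x := (x ^+ q).

Lemma two0 : 2%:R = 0 :> F. Proof. exact: pcharf0 ch2. Qed.
Lemma addxx (x : F) : x + x = 0.
Proof. by rewrite -mulr2n -mulr_natr two0 mulr0. Qed.
Lemma oppE (x : F) : - x = x.
Proof. by apply: (@addrI _ x); rewrite addrN addxx. Qed.
Lemma subE (x y : F) : x - y = x + y.
Proof. by rewrite oppE. Qed.
Lemma sqrD (x y : F) : (x + y) ^+ 2 = x ^+ 2 + y ^+ 2.
Proof. by rewrite sqrrD -mulr_natr two0 mulr0 addr0. Qed.
Lemma exp2kD k (x y : F) : (x + y) ^+ (2 ^ k) = x ^+ (2 ^ k) + y ^+ (2 ^ k).
Proof.
elim: k x y => [|k IH] x y; first by rewrite !expr1.
by rewrite expnS !exprM sqrD IH.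
Qed.
Lemma q_gt0 : (0 < q)%N. Proof. by rewrite hq expn_gt0. Qed.
Lemma FrD (x y : F) : Fr (x + y) = Fr x + Fr y.
Proof. by rewrite hq exp2kD. Qed.
Lemma FrN (x : F) : Fr (- x) = - Fr x.
Proof. by rewrite !oppE. Qed.
Lemma FrB (x y : F) : Fr (x - y) = Fr x - Fr y.
Proof. by rewrite FrD FrN. Qed.
Lemma FrM (x y : F) : Fr (x * y) = Fr x * Fr y.
Proof. exact: exprMn. Qed.
Lemma FrV (x : F) : Fr (x ^-1) = (Fr x) ^-1.
Proof. exact: exprVn. Qed.
Lemma Fr1 : Fr (1 : F) = 1. Proof. exact: expr1n. Qed.
Lemma Fr0 : Fr (0 : F) = 0. Proof. by rewrite expr0n eqn0Ngt q_gt0. Qed.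
Lemma FrFr (x : F) : Fr (Fr x) = x.
Proof. by rewrite -exprM mulnn -hF expf_card. Qed.
Lemma Fr_eq0 (x : F) : (Fr x == 0) = (x == 0).
Proof. by rewrite expf_eq0 q_gt0. Qed.
Lemma FrX (x : F) n : Fr (x ^+ n) = (Fr x) ^+ n.
Proof. by rewrite exprAC. Qed.
Lemma sq_inj (x y : F) : x ^+ 2 = y ^+ 2 -> x = y.
Proof.
move=> h; have : (x - y) ^+ 2 == 0 by rewrite subE sqrD h addxx.
by rewrite expf_eq0 /= subr_eq0 => /eqP.
Qed.

Definition FrE := (FrD, FrN, FrB, FrM, FrV, Fr1, Fr0, FrFr, FrX).

Lemma abstrace_tele (u : F) : abstrace q (u ^+ 2 + u) = Fr u + u.
Proof.
rewrite /abstrace.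
have -> : \sum_(i < logn 2 q) (u ^+ 2 + u) ^+ (2 ^ i) =
          \sum_(0 <= i < logn 2 q) (u ^+ (2 ^ i.+1) - u ^+ (2 ^ i)).
  rewrite big_mkord; apply: eq_bigr => i _.
  by rewrite exp2kD -exprM -expnS subE addrC.
rewrite telescope_sumr // -hq expr1 subE //.
Qed.

Lemma aniso (al be e : F) : ~~ inFq q be ->
  abstrace q (al ^+ q.+1 / (be ^+ q + be) ^+ 2) = 0 -> e != 0 ->
  al * e ^+ 2 + Fr al * (Fr e) ^+ 2 + (be + Fr be) * (e * Fr e) != 0.
Proof.
move=> nbe htr e0; apply/negP => /eqP hQ.
set B := be + Fr be in hQ.
have B0 : B != 0.
  apply: contra nbe => /eqP h; apply/eqP.
  by apply/eqP; rewrite -subr_eq0 subE addrC -/B h.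
have FrB_ : Fr B = B by rewrite /B !FrE addrC.
have fe0 : Fr e != 0 by rewrite Fr_eq0.
have D0 : B * (e * Fr e) != 0 by rewrite !mulf_neq0.
set u := al * e ^+ 2 / (B * (e * Fr e)).
have Fru : Fr u = Fr al * (Fr e) ^+ 2 / (B * (e * Fr e)).
  by rewrite /u !FrE /B [Fr be + be]addrC [Fr e * e]mulrC.
have hs : u + Fr u = 1.
  rewrite Fru /u -mulrDl.
  have -> : al * e ^+ 2 + Fr al * Fr e ^+ 2 = B * (e * Fr e).
    by rewrite -[RHS]oppE; apply/eqP; rewrite -subr_eq0 opprK hQ.
  by rewrite divff.
have hp : u * Fr u = al ^+ q.+1 / (be ^+ q + be) ^+ 2.
  rewrite Fru /u [be ^+ q + be]addrC -/B (exprS al).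
  have key : forall a' e' : F, e' != 0 ->
    (al * e ^+ 2 / (B * (e * e'))) * (a' * e' ^+ 2 / (B * (e * e'))) = al * a' / B ^+ 2.
    by move=> a' e' h; field; rewrite B0 e0 h.
  exact: key.
have hFu : Fr u = u + 1 by rewrite -hs addrA addxx add0r.
move: htr; rewrite -hp hFu mulrDr mulr1 -expr2 abstrace_tele.
rewrite hFu addrC addrA addxx add0r => /eqP; by rewrite oner_eq0.
Qed.
End Fr.

Section Geo0.
Variable F : finFieldType.
Definition i0 : 'I_3 := ord0.
Definition i1 : 'I_3 := Ordinal (isT : 1 < 3)%N.
Definition i2 : 'I_3 := Ordinal (isT : 2 < 3)%N.

Lemma det3_pt (x1 y1 z1 x2 y2 z2 x3 y3 z3 : F) :
  det3 (pt x1 y1 z1) (pt x2 y2 z2) (pt x3 y3 z3) =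
  x1 * (y2 * z3 - z2 * y3) - y1 * (x2 * z3 - z2 * x3) + z1 * (x2 * y3 - y2 * x3).
Proof.
rewrite /det3 (expand_det_row _ ord0) !big_ord_recl big_ord0 /cofactor.
rewrite !(expand_det_row _ ord0) !big_ord_recl !big_ord0 /cofactor.
rewrite !det_mx11 !mxE /= /bump /=. ring.
Qed.

Lemma vec_pt (u : vec F) : u = pt (u 0 i0) (u 0 i1) (u 0 i2).
Proof.
apply/rowP => j; rewrite mxE.
case: j => [[|[|[|j]]] hj] //=; rewrite ?ord1;
  try by congr (u _ _); apply/val_inj.
Qed.

Lemma pt0 (x y z : F) : (pt x y z) 0 i0 = x. Proof. by rewrite mxE. Qed.
Lemma pt1 (x y z : F) : (pt x y z) 0 i1 = y. Proof. by rewrite mxE. Qed.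
Lemma pt2 (x y z : F) : (pt x y z) 0 i2 = z. Proof. by rewrite mxE. Qed.
Lemma pt2' (x y z : F) : (pt x y z) 0 2%:R = z. Proof. by rewrite mxE. Qed.
Lemma i2E : (2%:R : 'I_3) = i2. Proof. by apply/val_inj. Qed.

Lemma scale_pt (k x y z : F) : k *: pt x y z = pt (k * x) (k * y) (k * z).
Proof. by apply/rowP => j; rewrite !mxE; case: j => [[|[|[|j]]] hj]. Qed.

Lemma add_pt (x y z x' y' z' : F) : pt x y z + pt x' y' z' = pt (x + x') (y + y') (z + z').
Proof. by apply/rowP => j; rewrite !mxE; case: j => [[|[|[|j]]] hj]. Qed.

Lemma det3E (u v w : vec F) : det3 u v w =
  u 0 i0 * (v 0 i1 * w 0 i2 - v 0 i2 * w 0 i1)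
  - u 0 i1 * (v 0 i0 * w 0 i2 - v 0 i2 * w 0 i0)
  + u 0 i2 * (v 0 i0 * w 0 i1 - v 0 i1 * w 0 i0).
Proof. by rewrite {1}(vec_pt u) {1}(vec_pt v) {1}(vec_pt w) det3_pt. Qed.

Lemma det3Zl k (u v w : vec F) : det3 (k *: u) v w = k * det3 u v w.
Proof. rewrite !det3E !mxE; ring. Qed.
Lemma det3Zm k (u v w : vec F) : det3 u (k *: v) w = k * det3 u v w.
Proof. rewrite !det3E !mxE; ring. Qed.
Lemma det3Zr k (u v w : vec F) : det3 u v (k *: w) = k * det3 u v w.
Proof. rewrite !det3E !mxE; ring. Qed.

Definition rows3 (u v w : vec F) : 'M[F]_3 :=
  \matrix_(i < 3, j < 3)
     (if (i : nat) == 0%N then u 0 j else if (i : nat) == 1%N then v 0 j else w 0 j).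
Lemma det3_rows u v w : det3 u v w = \det (rows3 u v w). Proof. by []. Qed.

Lemma mul_rows3 (z u v w : vec F) :
  z *m rows3 u v w = z 0 i0 *: u + z 0 i1 *: v + z 0 i2 *: w.
Proof.
apply/rowP => j; rewrite !mxE !big_ord_recl big_ord0 !mxE /=.
rewrite addr0 /bump /=.
have -> : (lift ord0 ord0 : 'I_3) = i1 by apply/val_inj.
have -> : (lift ord0 (lift ord0 ord0) : 'I_3) = i2 by apply/val_inj.
by rewrite addrA.
Qed.

Lemma pt_mul_rows3 (a b c : F) u v w :
  pt a b c *m rows3 u v w = a *: u + b *: v + c *: w.
Proof. by rewrite mul_rows3 pt0 pt1 pt2. Qed.

Lemma linf_pt (v : vec F) : on_linf v = (v 0 i2 == 0).
Proof. by rewrite /on_linf i2E. Qed.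

Definition lf (c v : vec F) := \sum_(i < 3) c 0 i * v 0 i.
Lemma lfE c v : lf c v = c 0 i0 * v 0 i0 + c 0 i1 * v 0 i1 + c 0 i2 * v 0 i2.
Proof.
rewrite /lf !big_ord_recl big_ord0 addr0 addrA.
have -> : (lift ord0 ord0 : 'I_3) = i1 by apply/val_inj.
by have -> : (lift ord0 (lift ord0 ord0) : 'I_3) = i2 by apply/val_inj.
Qed.

End Geo0.

Section Core.
Variables (F : finFieldType) (q : nat).
Hypothesis ch2 : 2 \in [pchar F].
Hypothesis hq : q = (2 ^ logn 2 q)%N.
Hypothesis hF : #|F| = (q ^ 2)%N.
Variables (al be : F).
Hypothesis hbe : ~~ inFq q be.
Hypothesis htr : abstrace q (al ^+ q.+1 / (be ^+ q + be) ^+ 2) = 0.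
Hypothesis al0 : al != 0.
Local Notation Fr x := (x ^+ q).
Local Notation FrE := (FrE ch2 hq hF).
Local Notation subE := (subE ch2).
Local Notation addxx := (addxx ch2).
Local Notation oppE := (oppE ch2).

Lemma FrBB : Fr (be + Fr be) = be + Fr be.
Proof. by rewrite !FrE addrC. Qed.

Lemma be0 : be != 0.
Proof. by apply: contra hbe => /eqP ->; rewrite /inFq (Fr0 F hq). Qed.

Lemma BB0 : be + Fr be != 0.
Proof.
apply: contra hbe => /eqP h; apply/eqP.
by apply/eqP; rewrite -subr_eq0 subE addrC h.
Qed.

Lemma inFq0 : inFq q (0 : F). Proof. by rewrite /inFq (Fr0 F hq). Qed.

Lemma FrQ_gen (e : F) :
  Fr (al * e ^+ 2 + Fr al * (Fr e) ^+ 2 + (be + Fr be) * (e * Fr e)) =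
  al * e ^+ 2 + Fr al * (Fr e) ^+ 2 + (be + Fr be) * (e * Fr e).
Proof.
rewrite !FrE; move: (Fr e) (Fr al) (Fr be) => fe fal fbe; ring.
Qed.

Lemma tangent_core (x0 r0 m : F) : inFq q r0 -> m + (be + Fr be) * Fr x0 != 0 ->
  exists2 s, s != 0 &
    inFq q (r0 + m * s - al * s ^+ 2 - be * (x0 * Fr s + s * Fr x0 + s * Fr s)).
Proof.
move=> hr0 rho0.
have [rho hrho] : exists rho, rho = m + (be + Fr be) * Fr x0 by eexists.
rewrite -hrho in rho0.
have hm : m = rho + (be + Fr be) * Fr x0 by rewrite hrho -addrA addxx addr0.
rewrite hm; clear hm hrho.
have [e he] : exists e, e = be / rho by eexists.
have e0 : e != 0 by rewrite he mulf_neq0 ?invr_eq0 ?be0.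
have hre : rho * e = be by rewrite he mulrC divfK.
have hfre : Fr rho * Fr e = Fr be.
  by rewrite he !FrE mulrC divfK // (Fr_eq0 hq).
have [Qe hQ] : exists Qe, Qe = al * e ^+ 2 + Fr al * (Fr e) ^+ 2 + (be + Fr be) * (e * Fr e)
  by eexists.
have Qe0 : Qe != 0 by rewrite hQ; exact: (aniso ch2 hq hF hbe htr e0).
have FrQ : Fr Qe = Qe by rewrite hQ FrQ_gen.
have [lam hl] : exists lam, lam = (be + Fr be) / Qe by eexists.
have Flam : Fr lam = lam by rewrite hl !FrE FrQ addrC.
have lam0 : lam != 0 by rewrite hl mulf_neq0 ?invr_eq0 ?BB0.
have hlq : lam * Qe = be + Fr be by rewrite hl divfK.
exists (lam * e); first by rewrite mulf_neq0.
rewrite /inFq; rewrite -[X in _ == X]oppE -addr_eq0.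
rewrite !subE !FrE Flam (eqP hr0).
apply/eqP.
apply: (@eq_trans _ _ ((r0 + r0) + lam * (rho * e - be) + lam * (Fr rho * Fr e - Fr be)
   + lam * (lam * Qe - (be + Fr be)) + (lam * (be + Fr be) + lam * (be + Fr be))
   + (lam * (be + Fr be) * (Fr x0 * e + x0 * Fr e) + lam * (be + Fr be) * (Fr x0 * e + x0 * Fr e)))).
  rewrite hQ; move: (Fr rho) (Fr e) (Fr x0) (Fr al) (Fr be) => frho fe fx0 fal fbe.
  ring.
by rewrite hre hfre hlq !subrr !mulr0 !addr0 !addxx ?addr0.
Qed.

Lemma foot (a b : F) (p0 : vec F) : U_ab q al be p0 ->
  (forall w, w != 0 -> U_ab q al be w -> det3 (pt a b 1) p0 w = 0 -> projeq w p0) ->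
  exists k x0 y0, [/\ k != 0, p0 = k *: pt x0 y0 1,
    Fr (y0 - al * x0 ^+ 2 - be * x0 ^+ q.+1) = y0 - al * x0 ^+ 2 - be * x0 ^+ q.+1 &
    y0 - b = (be + Fr be) * Fr x0 * (x0 - a)].
Proof.
have nz1 : forall x y : F, pt x y 1 != 0.
  move=> x y; apply/eqP => h; have := congr1 (fun v : vec F => v 0 i2) h.
  by rewrite pt2 mxE => /eqP; rewrite oner_eq0.
move=> [[x0 [r0 [hr0 [k [k0 ->]]]]] | [k [k0 ->]]] H; last first.
  exfalso.
  have := H (pt a (al * a ^+ 2 + be * a ^+ q.+1 + 0) 1) (nz1 _ _).
  case.
  - left; exists a, 0; split; first exact: inFq0.
    by exists 1; rewrite scale1r oner_neq0.
  - by rewrite det3Zm det3_pt; ring.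
  move=> k' [_ /(congr1 (fun v : vec F => v 0 i2))].
  by rewrite !scale_pt !pt2 !mulr0 => /eqP; rewrite oner_eq0.
set y0 := al * x0 ^+ 2 + be * x0 ^+ q.+1 + r0 in H *.
exists k, x0, y0; split => //.
  have -> : y0 - al * x0 ^+ 2 - be * x0 ^+ q.+1 = r0 by rewrite /y0; ring.
  exact/eqP.
have [xa|xa] := eqVneq x0 a.
  exfalso.
  have := H (pt 0 1 0).
  case.
  - apply/eqP => h; have := congr1 (fun v : vec F => v 0 i1) h.
    by rewrite pt1 mxE => /eqP; rewrite oner_eq0.
  - by right; exists 1; rewrite scale1r oner_neq0.
  - by rewrite det3Zm det3_pt xa; ring.
  move=> k' [_ /(congr1 (fun v : vec F => (v 0 i1, v 0 i2)))].
  rewrite !scale_pt !pt1 !pt2 => -[] h1 h2.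
  have hk : k' * k = 0 by rewrite h2 mulr1.
  by move: h1; rewrite mulrA hk mul0r => /eqP; rewrite oner_eq0.
have hy0 : y0 = al * x0 ^+ 2 + be * (x0 * Fr x0) + r0 by rewrite /y0 (exprS _ q).
clearbody y0.
have xa0 : x0 - a != 0 by rewrite subr_eq0.
have [m hm] : exists m, m * (x0 - a) = y0 - b by exists ((y0 - b) / (x0 - a)); rewrite divfK.
suff rho0 : m + (be + Fr be) * Fr x0 = 0.
  have hm' : m = (be + Fr be) * Fr x0.
    by rewrite -[RHS]oppE; apply/eqP; rewrite -addr_eq0 rho0.
  by rewrite -hm -hm'.
apply/eqP; apply: contraT => rho0.
have [s s0 hr] := tangent_core hr0 rho0.
set r := r0 + m * s - al * s ^+ 2 - be * (x0 * Fr s + s * Fr x0 + s * Fr s) in hr.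
have hy : al * (x0 + s) ^+ 2 + be * (x0 + s) ^+ q.+1 + r = y0 + m * s.
  rewrite /r hy0 !(exprS _ q) (FrD ch2 hq) (sqrD ch2).
  move: (Fr s) (Fr x0) => fs fx0; ring.
have := H (pt (x0 + s) (al * (x0 + s) ^+ 2 + be * (x0 + s) ^+ q.+1 + r) 1) (nz1 _ _).
case.
- left; exists (x0 + s), r; split => //.
  by exists 1; rewrite scale1r oner_neq0.
- rewrite hy det3Zm det3_pt.
  apply: (@eq_trans _ _ (k * s * (m * (x0 - a) - (y0 - b)))); first by ring.
  by rewrite hm subrr mulr0.
move=> k' [_ /(congr1 (fun v : vec F => (v 0 i0, v 0 i2)))].
rewrite !scale_pt !pt0 !pt2 => -[h1 h2].
have hk : k' * k = 1 by rewrite mulr1 in h2; rewrite -h2.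
move: h1; rewrite mulrA hk mul1r => /eqP; rewrite -subr_eq0 addrC addKr.
by rewrite (negbTE s0).
Qed.

Definition FC (a b x y : F) :=
  Fr (y - al * x ^+ 2 - be * x ^+ q.+1) = y - al * x ^+ 2 - be * x ^+ q.+1 /\
  y - b = (be + Fr be) * Fr x * (x - a).

Lemma footG a b x y : FC a b x y ->
  al * x ^+ 2 + Fr al * (Fr x) ^+ 2 =
  b + Fr b - (be + Fr be) * (a * Fr a) + (be + Fr be) * ((x - a) * (Fr x - Fr a)).
Proof.
move=> [h1 h2].
have hy : y = b + (be + Fr be) * Fr x * (x - a) by rewrite -h2 addrC subrK.
have h0 : Fr (y - al * x ^+ 2 - be * x ^+ q.+1) + (y - al * x ^+ 2 - be * x ^+ q.+1) = 0
  by rewrite h1 addxx.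
apply/eqP; rewrite -subr_eq0 -oppr_eq0 -{}h0 hy (exprS _ q) !FrE.
apply/eqP; move: (Fr x) (Fr a) (Fr al) (Fr be) (Fr b) => fx fa fal fbe fb; ring.
Qed.

Lemma same_x a b ki xi yi kj xj yj : ki != 0 -> kj != 0 ->
  FC a b xi yi -> FC a b xj yj -> xi = xj ->
  projeq (ki *: pt xi yi 1) (kj *: pt xj yj 1).
Proof.
move=> ki0 kj0 [_ hi] [_ hj] exy.
have eyy : yi = yj by rewrite -(subrK b yi) -(subrK b yj) hi hj exy.
exists (ki / kj); split; first by rewrite mulf_neq0 ?invr_eq0.
by rewrite scalerA divfK // exy eyy.
Qed.

Lemma arc_core a b k1 x1 y1 k2 x2 y2 k3 x3 y3 :
  k1 != 0 -> k2 != 0 -> k3 != 0 ->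
  FC a b x1 y1 -> FC a b x2 y2 -> FC a b x3 y3 ->
  det3 (k1 *: pt x1 y1 1) (k2 *: pt x2 y2 1) (k3 *: pt x3 y3 1) = 0 ->
  projeq (k1 *: pt x1 y1 1) (k2 *: pt x2 y2 1) \/
  projeq (k1 *: pt x1 y1 1) (k3 *: pt x3 y3 1) \/
  projeq (k2 *: pt x2 y2 1) (k3 *: pt x3 y3 1).
Proof.
move=> k10 k20 k30 f1 f2 f3 hD.
have [e12|n12] := eqVneq x1 x2; first by left; exact: (same_x k10 k20 f1 f2 e12).
have [e13|n13] := eqVneq x1 x3; first by right; left; exact: (same_x k10 k30 f1 f3 e13).
have [e23|n23] := eqVneq x2 x3; first by right; right; exact: (same_x k20 k30 f2 f3 e23).
exfalso.
set B := be + Fr be.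
have B0 : B != 0 := BB0.
have FB : Fr B = B := FrBB.
have G1 := footG f1; have G2 := footG f2; have G3 := footG f3.
move: f1 f2 f3 => [_ h1] [_ h2] [_ h3].
rewrite -/B in h1 h2 h3 G1 G2 G3.
clearbody B.
have hy : forall x y, y - b = B * Fr x * (x - a) ->
    y = b - B * (a * Fr a) + B * Fr a * x + B * ((x - a) * (Fr x - Fr a)).
  move=> x y h; rewrite -(subrK b y) h.
  move: (Fr x) (Fr a) => fx fa; ring.
move: (hy _ _ h1) (hy _ _ h2) (hy _ _ h3) => {h1 h2 h3} hy1 hy2 hy3.
have Fz : forall x, Fr (B * ((x - a) * (Fr x - Fr a))) = B * ((x - a) * (Fr x - Fr a)).
  move=> x; rewrite !FrE FB; move: (Fr x) (Fr a) => fx fa; ring.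
set z1 := B * ((x1 - a) * (Fr x1 - Fr a)) in hy1 G1.
set z2 := B * ((x2 - a) * (Fr x2 - Fr a)) in hy2 G2.
set z3 := B * ((x3 - a) * (Fr x3 - Fr a)) in hy3 G3.
have Fz1 : Fr z1 = z1 := Fz x1.
have Fz2 : Fr z2 = z2 := Fz x2.
have Fz3 : Fr z3 = z3 := Fz x3.
have ez1 : z1 = B * ((x1 - a) * (Fr x1 - Fr a)) by [].
have ez2 : z2 = B * ((x2 - a) * (Fr x2 - Fr a)) by [].
have ez3 : z3 = B * ((x3 - a) * (Fr x3 - Fr a)) by [].
clearbody z1 z2 z3.
have [d2 hd2] : exists d, x2 = x1 + d by exists (x2 - x1); rewrite addrC subrK.
have [d3 hd3] : exists d, x3 = x1 + d by exists (x3 - x1); rewrite addrC subrK.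
have d20 : d2 != 0 by apply: contra n12; rewrite hd2 => /eqP ->; rewrite addr0.
have d30 : d3 != 0 by apply: contra n13; rewrite hd3 => /eqP ->; rewrite addr0.
have d23 : d3 != d2 by apply: contra n23; rewrite hd2 hd3 => /eqP ->.
have hD' : d2 * (z3 - z1) = d3 * (z2 - z1).
  move: hD; rewrite det3Zl det3Zm det3Zr det3_pt hy1 hy2 hy3 => /eqP.
  rewrite !mulf_eq0 (negbTE k10) (negbTE k20) (negbTE k30) /= => /eqP.

  move=> hD; apply/eqP; rewrite -subr_eq0; apply/eqP; rewrite -hD hd2 hd3.
  move: (Fr a) => fa; ring.
set s := d3 / d2.
have hs : d3 = s * d2 by rewrite /s divfK.
have Fs : Fr s = s.
  have [ez|nz] := eqVneq z2 z1.
    have ez31 : z3 = z1.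
      move: hD'; rewrite ez subrr mulr0 => /eqP; rewrite mulf_eq0 (negbTE d20) /=.
      by rewrite subr_eq0 => /eqP.
    have hQx : forall x, al * x ^+ 2 + Fr al * (Fr x) ^+ 2 = b + Fr b - B * (a * Fr a) + z1 ->
        al * (x - x1) ^+ 2 = Fr al * (Fr (x - x1)) ^+ 2.
      move=> x hG.
      have e : al * (x - x1) ^+ 2 + Fr al * (Fr (x - x1)) ^+ 2 =
               (al * x ^+ 2 + Fr al * (Fr x) ^+ 2) + (al * x1 ^+ 2 + Fr al * (Fr x1) ^+ 2).
        rewrite !subE (sqrD ch2) !FrE (sqrD ch2).
        move: (Fr x) (Fr x1) (Fr al) => fx fx1 fal; ring.
      move: e; rewrite hG G1 addxx => /eqP; rewrite addr_eq0 => /eqP ->.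
      by rewrite [- (_ * _)]oppE.
    have fd20 : Fr d2 != 0 by rewrite (Fr_eq0 hq).
    have q2 : al * d2 ^+ 2 = Fr al * (Fr d2) ^+ 2.
      have ed2 : x2 - x1 = d2 by rewrite hd2 (addrC x1) addrK.
      by have := hQx x2; rewrite ed2; apply; rewrite G2 ez.
    have q3 : al * d3 ^+ 2 = Fr al * (Fr d3) ^+ 2.
      have ed3 : x3 - x1 = d3 by rewrite hd3 (addrC x1) addrK.
      by have := hQx x3; rewrite ed3; apply; rewrite G3 ez31.
    have fal0 : Fr al != 0 by rewrite (Fr_eq0 hq).
    have e2 : al * Fr al * (d2 * Fr d3) ^+ 2 = al * Fr al * (d3 * Fr d2) ^+ 2.
      apply: (@eq_trans _ _ ((al * d2 ^+ 2) * (Fr al * (Fr d3) ^+ 2))).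
        by move: (Fr al) (Fr d3) => fal fd3; ring.
      rewrite q2 -q3; move: (Fr al) (Fr d2) => fal fd2; ring.
    have e3 := sq_inj ch2 (mulfI (mulf_neq0 al0 fal0) e2).
    rewrite /s !FrE; apply/eqP; rewrite eqr_div // mulrC -e3 mulrC //.
  have hz : d3 / d2 = (z3 - z1) / (z2 - z1).
    by apply/eqP; rewrite eqr_div ?subr_eq0 // [(z3 - z1) * d2]mulrC hD'.
  by rewrite /s hz !FrE Fz1 Fz2 Fz3.
clearbody s.
have hz : z3 - z1 = s * (z2 - z1).
  apply: (mulfI d20); rewrite hD' hs; ring.
have fx3 : Fr x3 = Fr x1 + s * Fr d2 by rewrite hd3 hs !FrE Fs.
have fx2 : Fr x2 = Fr x1 + Fr d2 by rewrite hd2 !FrE.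
have key : z3 - z1 - s * (z2 - z1) = B * (d2 * Fr d2) * (s * (s - 1)).
  rewrite ez1 ez2 ez3 fx3 fx2 hd2 hd3 hs.
  move: (Fr x1) (Fr d2) (Fr a) => fx1 fd2 fa; ring.
move: key; rewrite hz subrr => /esym /eqP.
rewrite !mulf_eq0 (negbTE B0) (negbTE d20) (Fr_eq0 hq) (negbTE d20) /= subr_eq0.
case/orP => /eqP hs'.
  by move: d30; rewrite hs hs' mul0r eqxx.
by move: d23; rewrite hs hs' mul1r eqxx.
Qed.

Lemma pencil_core a b k x0 y0 : FC a b x0 y0 ->
  inFq q ((be + Fr be) * ((x0 - a) * (Fr x0 - Fr a))) /\
  det3 (pt 1 ((be + Fr be) * Fr a) 0)
       (pt 1 ((be + Fr be) * ((x0 - a) * (Fr x0 - Fr a))) 0 *m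
          rows3 (pt 0 (b - (be + Fr be) * (a * Fr a)) 1) (pt 0 1 0) (pt 1 0 0))
       (k *: pt x0 y0 1) = 0.
Proof.
move=> [_ h2].
have hy : y0 = b + (be + Fr be) * Fr x0 * (x0 - a) by rewrite -h2 addrC subrK.
split.
  rewrite /inFq !FrE; apply/eqP.
  move: (Fr x0) (Fr a) (Fr be) => fx fa fbe; ring.
rewrite pt_mul_rows3 !scale_pt !add_pt det3_pt hy.
move: (Fr x0) (Fr a) (Fr be) => fx fa fbe; ring.
Qed.
End Core.

Section Trans.
Variables (F : finFieldType) (sig : {rmorphism F -> F}) (M : 'M[F]_3).
Hypothesis uM : M \in unitmx.
Local Notation f := (collin sig M).

Definition siginv := invF (fmorph_inj sig).
Lemma sig_inv x : sig (siginv x) = x. Proof. exact: f_invF. Qed.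

Lemma rows3_map (u v w : vec F) :
  map_mx sig (rows3 u v w) = rows3 (map_mx sig u) (map_mx sig v) (map_mx sig w).
Proof. by apply/matrixP => i j; rewrite !mxE; case: ifP => _; rewrite ?mxE //; case: ifP; rewrite ?mxE. Qed.

Lemma rows3_f (u v w : vec F) : rows3 (f u) (f v) (f w) = map_mx sig (rows3 u v w) *m M.
Proof.
rewrite rows3_map; apply/matrixP => i j; rewrite /collin [LHS]mxE [RHS]mxE.
case: ifP => h0; [|case: ifP => h1]; rewrite mxE; apply: eq_bigr => k _;
  by rewrite [in RHS]mxE ?h0 ?h1.
Qed.

Lemma det3_f (u v w : vec F) : det3 (f u) (f v) (f w) = sig (det3 u v w) * \det M.
Proof. by rewrite !det3_rows rows3_f det_mulmx det_map_mx. Qed.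

Lemma f_inj (u v : vec F) : f u = f v -> u = v.
Proof.
move=> h; have : map_mx sig u = map_mx sig v.
  by rewrite -(mulmxK uM (map_mx sig u)) -(mulmxK uM (map_mx sig v)); congr (_ *m _).
move/rowP => h'; apply/rowP => j; apply: (fmorph_inj sig).
by have := h' j; rewrite !mxE.
Qed.

Lemma fZ k (u : vec F) : f (k *: u) = sig k *: f u.
Proof. by rewrite /collin map_mxZ scalemxAl. Qed.

Lemma f0 : f 0 = 0.
Proof. by rewrite /collin map_mx0 mul0mx. Qed.

Lemma f_neq0 (u : vec F) : u != 0 -> f u != 0.
Proof. by apply: contra => /eqP h; apply/eqP; apply: f_inj; rewrite h f0. Qed.

Lemma f_surj (P : vec F) : f (map_mx siginv (P *m invmx M)) = P.
Proof.
rewrite /collin.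
have -> : map_mx sig (map_mx siginv (P *m invmx M)) = P *m invmx M.
  by apply/matrixP => i j; rewrite !mxE sig_inv.
by rewrite mulmxKV.
Qed.

Lemma projeq_f (u v : vec F) : projeq u v -> projeq (f u) (f v).
Proof. by move=> [k [k0 ->]]; exists (sig k); rewrite fmorph_eq0 k0 fZ. Qed.

Lemma projeq_fV (u v : vec F) : projeq (f u) (f v) -> projeq u v.
Proof.
move=> [k [k0 h]]; exists (siginv k); split.
  by apply: contra k0 => /eqP h0; rewrite -(sig_inv k) h0 rmorph0.
by apply: f_inj; rewrite fZ sig_inv.
Qed.

Lemma map_pt (x y z : F) : map_mx sig (pt x y z) = pt (sig x) (sig y) (sig z).
Proof. by apply/rowP => j; rewrite !mxE; case: j => [[|[|[|j]]] hj] //=; rewrite rmorph0. Qed.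

End Trans.

Section LA.
Variable F : finFieldType.

Lemma on_lineE (c v : vec F) : on_line c v = (lf c v == 0). Proof. by []. Qed.

Lemma vec_neq0 (z : vec F) : z != 0 -> [|| z 0 i0 != 0, z 0 i1 != 0 | z 0 i2 != 0].
Proof.
apply: contraR; rewrite !negb_or !negbK => /and3P[/eqP h0 /eqP h1 /eqP h2].
by rewrite (vec_pt z) h0 h1 h2; apply/eqP/rowP => j; rewrite !mxE; case: j => [[|[|[|j]]] hj].
Qed.

Lemma LA1 (c u v w : vec F) : c != 0 -> on_line c u -> on_line c v -> on_line c w ->
  det3 u v w = 0.
Proof.
move=> c0 hu hv hw; apply/eqP; rewrite det3_rows -det_tr.
apply/det0P; exists c => //.
apply/rowP => i; rewrite !mxE.
under eq_bigr => j _ do rewrite !mxE.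
by case: i => [[|[|[|i]]] hi] //=; apply/eqP.
Qed.

Lemma LA2 (c P p w : vec F) : c != 0 -> on_line c P -> on_line c p ->
  P != 0 -> p != 0 -> ~ projeq P p -> det3 P p w = 0 -> on_line c w.
Proof.
move=> c0 cP cp P0 p0 nPp /eqP; rewrite det3_rows => /det0P[z z0 hz].
move: hz; rewrite mul_rows3 => hz.
have lin : forall (a b d : F) (x y t : vec F),
    lf c (a *: x + b *: y + d *: t) = a * lf c x + b * lf c y + d * lf c t.
  by move=> a b d x y t; rewrite !lfE !mxE; ring.
have l0 : lf c 0 = 0 by rewrite lfE !mxE; ring.
move: (lin (z 0 i0) (z 0 i1) (z 0 i2) P p w); rewrite hz l0.
have cP' : lf c P = 0 := eqP cP.
have cp' : lf c p = 0 := eqP cp.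
rewrite cP' cp' !mulr0 !add0r => /esym /eqP.
rewrite mulf_eq0 => /orP[z2|]; last by rewrite on_lineE.
exfalso; move/eqP: z2 => z2.
move: hz; rewrite z2 scale0r addr0 => /eqP; rewrite addr_eq0 => /eqP hz.
have [z1|z1] := eqVneq (z 0 i1) 0.
  move: hz; rewrite z1 scale0r oppr0 => /eqP; rewrite scaler_eq0 (negbTE P0) orbF => z00.
  by move: (vec_neq0 z0); rewrite (eqP z00) z1 z2 eqxx.
have [z00|z00] := eqVneq (z 0 i0) 0.
  move: hz; rewrite z00 scale0r => /esym/eqP; rewrite oppr_eq0 scaler_eq0 (negbTE z1).
  by rewrite (negbTE p0).
apply: nPp; exists (- z 0 i1 / z 0 i0); split.
  by rewrite mulf_neq0 ?oppr_eq0 ?invr_eq0.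
rewrite -{1}[P]scale1r -(mulVf z00) -scalerA hz scalerN -scaleNr scalerA.
by rewrite mulNr mulrC mulNr.
Qed.

End LA.

Lemma projeq_trans (F : finFieldType) (x y u : vec F) : y != 0 ->
  projeq x u -> projeq y u -> projeq x y.
Proof.
move=> y0 [k1 [k10 ->]] [k2 [k20 hy]].
exists (k1 / k2); split; first by rewrite mulf_neq0 ?invr_eq0.
by rewrite hy scalerA divfK.
Qed.

Unset Implicit Arguments.
Theorem theorem1p7 (F : finFieldType) (q : nat)
  (hq : ~~ odd q) (hF : #|F| = (q ^ 2)%N)
  (U : vec F -> Prop) (hU : nonclassical_orthBM q U)
  (P : vec F) (hP0 : P != 0) (hPU : ~ U P) (hPl : ~~ on_linf P) :
  lies_on_baer_pencil_linf q (pedal U P) /\ is_arc (pedal U P).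
Proof.
move: hU => [al [be [sig [M [[hbe htr] [al0 [uM [hfix HU]]]]]]]].
have [ch2 hqq] := char2 hq hF.
have U_ab_scale : forall k v, k != 0 -> U_ab q al be v -> U_ab q al be (k *: v).
  move=> k v k0 [[x [r [hr [k1 [k10 ->]]]]]|[k1 [k10 ->]]].
    left; exists x, r; split=> //; exists (k * k1); split; last by rewrite scalerA.
    by rewrite mulf_neq0.
  right; exists (k * k1); split; last by rewrite scalerA.
  by rewrite mulf_neq0.
have siginv0 : forall k, k != 0 -> siginv sig k != 0.
  move=> k; apply: contra => /eqP h0; by rewrite -(sig_inv sig k) h0 rmorph0.
have U_scale : forall k v, k != 0 -> U v -> U (k *: v).
  move=> k v k0 /HU [v0 [hv0 ->]]; apply/HU; exists (siginv sig k *: v0); split.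
    exact: U_ab_scale (siginv0 _ k0) hv0.
  by rewrite fZ sig_inv.
have hP := f_surj sig uM P.
set P0 := map_mx (siginv sig) (P *m invmx M) in hP.
have P00 : P0 != 0.
  by apply: contra hP0 => /eqP h; rewrite -hP h f0.
have P0l : ~~ on_linf P0 by apply: contra hPl => h; rewrite -hP; apply: hfix.
have c20 : P0 0 i2 != 0 by rewrite linf_pt in P0l.
set a := P0 0 i0 / P0 0 i2.
set b := P0 0 i1 / P0 0 i2.
have hPP : P0 = P0 0 i2 *: pt a b 1.
  by rewrite {1}(vec_pt P0) scale_pt /a /b !(mulrC (P0 0 i2)) !divfK // mul1r.
have nPU : forall p, U p -> ~ projeq P p.
  move=> p Up [k [k0 e]]; apply: hPU; rewrite e; exact: U_scale.
have foot_of : forall p, pedal U P p -> exists p0 k x0 y0,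
    [/\ p = collin sig M p0, k != 0, p0 = k *: pt x0 y0 1 & FC q al be a b x0 y0].
  move=> p [p0' [Up [c [[c0 [u [u0 [Uu [cu hu]]]]] [cP cp]]]]].
  have [p0 [Up0 ep]] := (HU p).1 Up.
  have H : forall w, w != 0 -> U_ab q al be w -> det3 (pt a b 1) p0 w = 0 -> projeq w p0.
    move=> w w0 Uw hd.
    have Ufw : U (collin sig M w) by apply/HU; exists w.
    have d0 : det3 P p (collin sig M w) = 0.
      by rewrite -hP ep det3_f hPP det3Zl hd mulr0 rmorph0 mul0r.
    have cw : on_line c (collin sig M w) := LA2 c0 cP cp hP0 p0' (nPU p Up) d0.
    have h1 := hu _ (f_neq0 sig uM w0) Ufw cw.
    have h2 := hu _ p0' Up cp.
    apply: (projeq_fV (sig:=sig) uM); rewrite -ep.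
    exact: projeq_trans p0' h1 h2.
  have [k [x0 [y0 [k0 e0 F1 F2]]]] := foot ch2 hqq hF hbe htr Up0 H.
  by exists p0, k, x0, y0.
split.
  have [V0 hV0] : exists V0 : vec F, V0 = pt 1 ((be + be ^+ q) * a ^+ q) 0 by eexists.
  have [A0 hA0] : exists A0 : 'M[F]_3,
      A0 = rows3 (pt 0 (b - (be + be ^+ q) * (a * a ^+ q)) 1) (pt 0 1 0) (pt 1 0 0)
    by eexists.
  have V00 : V0 != 0.
    apply/eqP => h; have := congr1 (fun v : vec F => v 0 i0) h.
    by rewrite hV0 pt0 mxE => /eqP; rewrite oner_eq0.
  exists (collin sig M V0), (map_mx sig A0 *m M).
  split; [|split; [|split; [|split]]].
  - have := f_neq0 sig uM V00; exact.
  - by apply: (hfix V0 V00); rewrite hV0 linf_pt pt2.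
  - rewrite unitmx_mul map_unitmx uM andbT unitmxE unitfE hA0 -det3_rows det3_pt.
    have -> : forall b0 : F, 0 * (1 * 0 - 0 * 0) - b0 * (0 * 0 - 0 * 1) + 1 * (0 * 0 - 1 * 1)
        = - 1 :> F.
      by move=> b0; ring.
    by rewrite oppr_eq0 oner_eq0.
  - move=> u ul; apply/eqP => h.
    have : map_mx sig V0 = u *m map_mx sig A0.
      apply: (can_inj (mulmxK uM)).
      by move: h; rewrite /collin mulmxA.
    rewrite hV0 hA0 rows3_map mul_rows3 !map_pt => /rowP /(_ i0).
    rewrite !mxE !rmorph0 !rmorph1 !mulr0 !add0r mulr1.
    by move: ul; rewrite linf_pt => /eqP ->; move/eqP; rewrite oner_eq0.
  - move=> p /foot_of [p0 [k [x0 [y0 [ep k0 e0 FCp]]]]].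
    have [ht hd] := pencil_core ch2 hqq hF k FCp.
    rewrite -hV0 -hA0 -e0 in hd.
    set t := (be + be ^+ q) * ((x0 - a) * (x0 ^+ q - a ^+ q)) in ht hd.
    exists 1, (sig t); split; first by rewrite /inFq expr1n.
    split; first by rewrite /inFq -rmorphXn (eqP ht).
    split; first by left; rewrite oner_neq0.
    have e1 : pt 1 (sig t) 0 *m (map_mx sig A0 *m M) = collin sig M (pt 1 t 0 *m A0).
      by rewrite /collin map_mxM map_pt rmorph1 rmorph0 mulmxA.
    by rewrite e1 ep det3_f hd rmorph0 mul0r.
move=> c u v w c0 u0 v0 w0 pu pv pw cu cv cw.
have hd := LA1 c0 cu cv cw.
move: (foot_of u pu) (foot_of v pv) (foot_of w pw).
move=> [u1 [k1 [x1 [y1 [eu k10 eu1 F1]]]]] [v1 [k2 [x2 [y2 [ev k20 ev1 F2]]]]]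
  [w1 [k3 [x3 [y3 [ew k30 ew1 F3]]]]].
have hd0 : det3 u1 v1 w1 = 0.
  move: hd; rewrite eu ev ew det3_f => /eqP; rewrite mulf_eq0 fmorph_eq0 => /orP[/eqP //|].
  by move=> /eqP hM; move: uM; rewrite unitmxE unitfE hM eqxx.
rewrite eu1 ev1 ew1 in hd0.
have := arc_core ch2 hqq hF hbe al0 k10 k20 k30 F1 F2 F3 hd0.
rewrite -eu1 -ev1 -ew1 eu ev ew.
case=> [h|[h|h]]; [left|right;left|right;right]; exact: projeq_f.
Qed.
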